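(* Let $G=x_0^4+x_1^4+x_2^4+x_3^4$ and $H=x_4^4+x_5^4+x_6^4+x_7^4+x_8^4+x_9^4$. If $K=\mathbb{Q}_2(\sqrt{2})$ with $\pi=\sqrt2$, or $K=\mathbb{Q}_2(\sqrt{10})$ with $\pi=\sqrt{10}$, then $F=G+\pi H$ has no nontrivial zero in $K^{10}$. If $K=\mathbb{Q}_2(\sqrt{-2})$ with $\pi=\sqrt{-2}$, or $K=\mathbb{Q}_2(\sqrt{-10})$ with $\pi=\sqrt{-10}$, then $F=G+(\pi+\pi^2)H$ has no nontrivial zero in $K^{10}$.
   Context: In each case $\pi$ is a uniformizer of the ring of integers of $K$. A nontrivial zero is a zero other than the all-zero vector. *)

(* Defs.v *)
From HB Require Import structures.
From mathcomp Require Import all_boot all_order all_algebra.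
Set Implicit Arguments. Unset Strict Implicit. Unset Printing Implicit Defensive.
Import Order.TTheory GRing.Theory Num.Theory.
Local Open Scope ring_scope.

(* A discrete valuation v : K^* -> Z (the value at 0 is irrelevant). *)
Definition dvaluation (K : fieldType) (v : K -> int) : Prop :=
  (forall x y : K, x != 0 -> y != 0 -> v (x * y) = v x + v y) /\
  (forall x y : K, x != 0 -> y != 0 -> x + y != 0 ->
     Num.min (v x) (v y) <= v (x + y)).

Definition residue_F2 (K : fieldType) (v : K -> int) : Prop :=
  forall x : K, x != 0 -> 0 <= v x -> 0 < v x \/ x = 1 \/ 0 < v (x - 1).

(* x and y agree to precision n for v (x = y means distance 0). *)
Definition vclose (K : fieldType) (v : K -> int) (x y : K) (n : int) : Prop :=
  x = y \/ n <= v (x - y).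

Definition v_complete (K : fieldType) (v : K -> int) : Prop :=
  forall s : nat -> K,
    (forall n : int, exists N : nat, forall i j : nat, (N <= i)%N -> (N <= j)%N ->
        vclose v (s i) (s j) n) ->
    exists l : K, forall n : int, exists N : nat, forall i : nat, (N <= i)%N ->
        vclose v (s i) l n.

(* For d in {2, 10, -2, -10} such a K is
   (isomorphic, as a valued field, to) Q_2(sqrt d) with pi = sqrt d. *)
Definition quad_ext_Q2 (K : fieldType) (v : K -> int) (pi : K) (d : int) : Prop :=
  dvaluation v /\ residue_F2 v /\ v_complete v /\
  pi != 0 /\ v pi = 1 /\ pi ^+ 2 = d%:~R.

Definition Gform (K : fieldType) (x : 'I_10 -> K) : K :=
  \sum_(i < 10 | (i < 4)%N) x i ^+ 4.
Definition Hform (K : fieldType) (x : 'I_10 -> K) : K :=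
  \sum_(i < 10 | (4 <= i)%N) x i ^+ 4.

Definition nontrivial_zero (K : fieldType) (F : ('I_10 -> K) -> K) (x : 'I_10 -> K) : Prop :=
  F x = 0 /\ exists i, x i != 0.

(* Main.v *)
Require Import Defs.
From HB Require Import structures.
From mathcomp Require Import all_boot all_order all_algebra.
From mathcomp Require Import zify ring lra.
Set Implicit Arguments. Unset Strict Implicit. Unset Printing Implicit Defensive.
Import Order.TTheory GRing.Theory Num.Theory.
Local Open Scope ring_scope.

Definition padd (p q : int * int) : int * int :=
  (((p.1 + q.1) %% 16)%Z, ((p.2 + q.2) %% 8)%Z).
Definition pmul (d : int) (p q : int * int) : int * int :=
  (((p.1 * q.1 + d * (p.2 * q.2)) %% 16)%Z, ((p.1 * q.2 + p.2 * q.1) %% 8)%Z).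
Definition pow4 d p := let p2 := pmul d p p in pmul d p2 p2.
Definition reslist d (c : int * int) (u : bool) : seq (int * int) :=
  undup [seq pmul d c (pow4 d (Posz a, Posz b)) | a <- [seq a <- iota 0 16 | u ==> odd a], b <- iota 0 8].
Definition sumset (L S : seq (int * int)) := undup [seq padd p q | p <- L, q <- S].
Definition reach d (c : nat -> int * int) (j : nat) :=
  foldr (fun i S => sumset (reslist d (c i) (i == j)) S) [:: (0, 0)] (iota 0 10).
Definition check d c j :=
  all (fun p : int * int => ~~ (((p.1 %% 16)%Z == 0) && ((p.2 %% 8)%Z == 0))) (reach d c j).
Definition cA (g : int * int) (i : nat) : int * int := if (i < 4)%N then (1, 0) else g.
Definition cB d (g : int * int) (i : nat) : int * int := if (i < 4)%N then (0, d) else g.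
Definition checkA d g := all (fun j : nat => (4 <= j)%N || check d (cA g) j) (iota 0 10).
Definition checkB d g := all (fun j : nat => (j < 4)%N || check d (cB d g) j) (iota 0 10).

Lemma lt01 (a : int) : 0 < a -> 1 <= a. Proof. lia. Qed.

Section Val.
Variables (K : fieldType) (v : K -> int) (pi : K) (d : int).
Hypothesis hq : quad_ext_Q2 v pi d.
Hypothesis he : exists k : int, d = 2 * (1 + 2 * k).

Definition vge (x : K) (n : int) := x = 0 \/ n <= v x.

Lemma vM x y : x != 0 -> y != 0 -> v (x * y) = v x + v y.
Proof. by case: hq => [[h _] _]; apply: h. Qed.

Lemma vmin x y : x != 0 -> y != 0 -> x + y != 0 -> Num.min (v x) (v y) <= v (x + y).
Proof. by case: hq => [[_ h] _]; apply: h. Qed.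

Lemma vmin' x y : x != 0 -> y != 0 -> x + y != 0 -> v x <= v (x + y) \/ v y <= v (x + y).
Proof. by move=> hx hy hs; have := vmin hx hy hs; rewrite ge_min => /orP. Qed.

Lemma pi_neq0 : pi != 0. Proof. by case: hq => [_ [_ [_ []]]]. Qed.
Lemma vpi : v pi = 1. Proof. by case: hq => [_ [_ [_ [_ []]]]]. Qed.
Lemma pi2 : pi ^+ 2 = d%:~R. Proof. by case: hq => [_ [_ [_ [_ []]]]]. Qed.
Lemma hres : residue_F2 v. Proof. by case: hq => [_ []]. Qed.

Lemma v1 : v 1 = 0.
Proof.
have h : v 1 = v 1 + v 1 by rewrite -vM ?mulr1 // oner_neq0.
lia.
Qed.

Lemma vN1 : v (-1) = 0.
Proof.
have h1 : (-1 : K) != 0 by rewrite oppr_eq0 oner_neq0.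
have h : 0 = v (-1) + v (-1) by rewrite -vM // mulrNN mulr1 v1.
lia.
Qed.

Lemma vN x : x != 0 -> v (- x) = v x.
Proof.
move=> hx; have h1 : (-1 : K) != 0 by rewrite oppr_eq0 oner_neq0.
by rewrite -mulN1r vM // vN1 add0r.
Qed.

Lemma vX x n : x != 0 -> v (x ^+ n) = (n%:Z * v x).
Proof.
move=> hx; elim: n => [|n IH]; first by rewrite expr0 v1 mul0r.
rewrite exprS vM ?expf_neq0 // IH.
have -> : (n.+1)%:Z = n%:Z + 1 by lia.
by rewrite mulrDl mul1r addrC.
Qed.

Lemma vV x : x != 0 -> v (x^-1) = - v x.
Proof.
move=> hx; have hx' : x^-1 != 0 by rewrite invr_eq0.
have h : 0 = v x + v x^-1 by rewrite -vM // mulfV // v1.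
lia.
Qed.

Lemma vge0 n : vge 0 n. Proof. by left. Qed.

Lemma vge_le x m n : m <= n -> vge x n -> vge x m.
Proof. move=> hmn [->|h]; [by left|right; lia]. Qed.

Lemma vge_opp x n : vge x n -> vge (- x) n.
Proof.
case=> [->|h]; first by rewrite oppr0; left.
case: (eqVneq x 0) => [->|hx]; first by rewrite oppr0; left.
by right; rewrite vN.
Qed.

Lemma vge_add x y n : vge x n -> vge y n -> vge (x + y) n.
Proof.
case=> [->|hx]; first by rewrite add0r.
case=> [->|hy]; first by rewrite addr0; right.
case: (eqVneq x 0) => [->|x0]; first by rewrite add0r; right.
case: (eqVneq y 0) => [->|y0]; first by rewrite addr0; right.
case: (eqVneq (x + y) 0) => [->|s0]; first by left.
right; have [h|h] := vmin' x0 y0 s0; [exact: le_trans hx h|exact: le_trans hy h].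
Qed.

Lemma vge_sub x y n : vge x n -> vge y n -> vge (x - y) n.
Proof. by move=> hx hy; apply: vge_add => //; apply: vge_opp. Qed.

Lemma vge_mul x y m n : vge x m -> vge y n -> vge (x * y) (m + n).
Proof.
case=> [->|hx]; first by rewrite mul0r; left.
case=> [->|hy]; first by rewrite mulr0; left.
case: (eqVneq x 0) => [->|x0]; first by rewrite mul0r; left.
case: (eqVneq y 0) => [->|y0]; first by rewrite mulr0; left.
by right; rewrite vM //; lia.
Qed.

Lemma vge_pi : vge pi 1. Proof. by right; rewrite vpi. Qed.

Lemma vge_1 : vge 1 0. Proof. by right; rewrite v1. Qed.

Lemma vge_nat (n : nat) : vge (n%:R) 0.
Proof.
elim: n => [|n IH]; first by left.
by rewrite -addn1 natrD; apply: vge_add => //; apply: vge_1.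
Qed.

Lemma vge_int (m : int) : vge (m%:~R) 0.
Proof.
case: m => n; first by rewrite -pmulrn; apply: vge_nat.
by rewrite NegzE mulrNz; apply: vge_opp; rewrite -pmulrn; apply: vge_nat.
Qed.

Lemma vstrict x y : x != 0 -> vge y (v x + 1) -> x + y != 0 /\ v (x + y) = v x.
Proof.
move=> x0 [->|hy]; first by rewrite addr0.
case: (eqVneq y 0) => [->|y0]; first by rewrite addr0.
have s0 : x + y != 0.
  apply/negP => /eqP h; have : y = - x by apply/eqP; rewrite -subr_eq0 opprK addrC h.
  move=> e; move: hy; rewrite e vN //; lia.
split => //.
have ny0 : - y != 0 by rewrite oppr_eq0.
have h1 := vmin' x0 y0 s0.
have ns : x + y + - y != 0 by rewrite addrK.
have h2 := vmin' s0 ny0 ns.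
move: h1 h2; rewrite addrK vN //.
move: hy; set a := v x; set b := v y; set c := v (x + y); lia.
Qed.


Lemma int2 : ((2 : int)%:~R : K) = 2. Proof. reflexivity. Qed.

Lemma vge_2 : 1 <= v 2 /\ (2 : K) != 0.
Proof.
have dn0 : (d%:~R : K) != 0 by rewrite -pi2 expf_neq0 // pi_neq0.
have t0 : (2 : K) != 0.
  apply/negP => /eqP h2; move: dn0; case: he => k ->.
  by rewrite intrM int2 h2 mul0r eqxx.
split => //.
have h0 : 0 <= v 2.
  case: (vge_nat 2) => [h|//]; by move: t0; rewrite h eqxx.
case: (hres t0 h0) => [h|[h|h]].
- lia.
- by move/eqP: h; rewrite mulr2n -subr_eq0 addrK oner_eq0.
- by move: h; rewrite mulr2n addrK v1.
Qed.

Lemma vodd k : ((1 + 2 * k)%:~R : K) != 0 /\ v ((1 + 2 * k)%:~R) = 0.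
Proof.
have [h2 t0] := vge_2.
have e : ((1 + 2 * k)%:~R : K) = 1 + 2 * k%:~R by rewrite intrD intrM int2.
have h21 : vge 2 1 by right.
have := vge_mul h21 (vge_int k); rewrite addr0 => H.
have Hy : vge (2 * k%:~R) (v 1 + 1) by rewrite v1 add0r.
have [H1 H2] := vstrict (oner_neq0 K) Hy.
by rewrite e; split => //; rewrite H2 v1.
Qed.

Lemma v2 : v 2 = 2.
Proof.
have [h2 t0] := vge_2.
case: he => k hk.
have [o0 ov] := vodd k.
have : v (pi ^+ 2) = 2 by rewrite vX ?pi_neq0 // vpi.
by rewrite pi2 hk intrM int2 vM // ov addr0.
Qed.


Definition emb (p : int * int) : K := p.1%:~R + p.2%:~R * pi.

Lemma vge_emb p : vge (emb p) 0.
Proof.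
apply: vge_add; first exact: vge_int.
have := vge_mul (vge_int p.2) vge_pi; rewrite add0r; apply: vge_le; lia.
Qed.

Lemma embD p q : emb (p.1 + q.1, p.2 + q.2) = emb p + emb q.
Proof. rewrite /emb /= !intrD; ring. Qed.

Lemma embM p q : emb p * emb q = emb (p.1 * q.1 + d * (p.2 * q.2), p.1 * q.2 + p.2 * q.1).
Proof.
rewrite /emb /= !intrD !intrM -pi2; ring.
Qed.

Lemma emb0 : emb (0, 0) = 0.
Proof. by rewrite /emb /= mul0r addr0. Qed.

Lemma vge_2X k : vge (2 ^+ k) (2 * k%:Z).
Proof. have [_ t0] := vge_2; right; rewrite vX // v2; lia. Qed.

Lemma vge_piX k : vge (pi ^+ k) k%:Z.
Proof. right; rewrite vX ?pi_neq0 // vpi; lia. Qed.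

Definition Rel (s : K) (p : int * int) := vge (s - emb p) 7.

Lemma Rel_red s A B : Rel s (A, B) -> Rel s ((A %% 16)%Z, (B %% 8)%Z).
Proof.
move=> h.
have e : emb (A, B) - emb ((A %% 16)%Z, (B %% 8)%Z) =
   (A %/ 16)%Z%:~R * 2 ^+ 4 + (B %/ 8)%Z%:~R * 2 ^+ 3 * pi.
  rewrite {1}(divz_eq A 16) {1}(divz_eq B 8) /emb /= !intrD !intrM; ring.
rewrite /Rel (_ : s - _ = (s - emb (A, B)) + (emb (A, B) - emb ((A %% 16)%Z, (B %% 8)%Z))); last by ring.
apply: vge_add => //; rewrite e; apply: vge_add.
  have := vge_mul (vge_int (A %/ 16)%Z) (vge_2X 4); apply: vge_le; lia.
have := vge_mul (vge_mul (vge_int (B %/ 8)%Z) (vge_2X 3)) vge_pi; apply: vge_le; lia.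
Qed.

Lemma Rel_emb p : Rel (emb p) p.
Proof. by rewrite /Rel subrr; left. Qed.

Lemma Rel_int s p : Rel s p -> vge s 0.
Proof.
move=> h; rewrite (_ : s = (s - emb p) + emb p); last by ring.
apply: vge_add; last exact: vge_emb.
by apply: vge_le h; lia.
Qed.


Lemma Rel_add s t p q : Rel s p -> Rel t q -> Rel (s + t) (padd p q).
Proof.
move=> hs ht; rewrite /padd; apply: Rel_red.
rewrite /Rel embD (_ : s + t - _ = (s - emb p) + (t - emb q)); last by ring.
exact: vge_add.
Qed.

Lemma Rel_mul s t p q : Rel s p -> Rel t q -> Rel (s * t) (pmul d p q).
Proof.
move=> hs ht; rewrite /pmul; apply: Rel_red.
rewrite /Rel -embM (_ : s * t - _ = (s - emb p) * t + emb p * (t - emb q)); last by ring.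
apply: vge_add.
  by have := vge_mul hs (Rel_int ht); rewrite addr0.
by have := vge_mul (vge_emb p) ht; rewrite add0r.
Qed.

Lemma piX n : exists p, pi ^+ n = emb p.
Proof.
elim: n => [|n [p hp]]; first by exists (1, 0); rewrite expr0 /emb /= mul0r addr0.
exists (p.2 * d, p.1); rewrite exprS hp /emb /= intrM -pi2; ring.
Qed.

Lemma digits x : vge x 0 -> forall n : nat, exists p, vge (x - emb p) n%:Z.
Proof.
move=> hx; elim=> [|n [p hp]]; first by exists (0, 0); rewrite emb0 subr0.
case: (eqVneq (x - emb p) 0) => [e|z0]; first by exists p; rewrite e; left.
have hn : n%:Z <= v (x - emb p) by case: hp => // e; move: z0; rewrite e eqxx.
have [q hpq] := piX n.
have pn0 : pi ^+ n != 0 by rewrite expf_neq0 // pi_neq0.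
set z := x - emb p in z0 hn hp.
set w := z / pi ^+ n.
have w0 : w != 0 by rewrite mulf_neq0 // invr_eq0.
have zw : z = w * pi ^+ n by rewrite /w mulfVK.
have vw : v z = v w + n%:Z by rewrite zw vM // vX ?pi_neq0 // vpi mulr1.
have hw0 : 0 <= v w by move: hn; rewrite vw; lia.
case: (hres w0 hw0) => [h|[h|h]].
- exists p; right; rewrite -/z vw; lia.
- exists (p.1 + q.1, p.2 + q.2); rewrite embD.
  rewrite (_ : x - (emb p + emb q) = z - pi ^+ n); last by rewrite hpq /z; ring.
  by rewrite zw h mul1r subrr; left.
- exists (p.1 + q.1, p.2 + q.2); rewrite embD.
  rewrite (_ : x - (emb p + emb q) = (w - 1) * pi ^+ n); last by rewrite -hpq mulrBl -zw /z mul1r; ring.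
  have h1 : vge (w - 1) 1.
    by right; apply: lt01; exact: h.
  have := vge_mul h1 (vge_piX n).
  by apply: vge_le; lia.
Qed.


Lemma even_of_vge m : vge (m%:~R) 1 -> exists k, m = 2 * k.
Proof.
move=> h.
have hm := divz_eq m 2.
have r0 : 0 <= (m %% 2)%Z by apply: modz_ge0.
have r1 : (m %% 2 < 2)%Z by apply: ltz_pmod.
have [e|e] : (m %% 2)%Z = 0 \/ (m %% 2)%Z = 1 by lia.
  by exists (m %/ 2)%Z; lia.
have e' : m = 1 + 2 * (m %/ 2)%Z by lia.
have [o0 ov] := vodd (m %/ 2)%Z.
rewrite e' in h; case: h => [h|h]; first by move: o0; rewrite h eqxx.
move: h; rewrite ov; lia.
Qed.

Lemma dec1 A B : vge (emb (A, B)) 1 -> exists k, A = 2 * k.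
Proof.
move=> h.
have hm := divz_eq A 2.
have r0 : 0 <= (A %% 2)%Z by apply: modz_ge0.
have r1 : (A %% 2 < 2)%Z by apply: ltz_pmod.
have [e|e] : (A %% 2)%Z = 0 \/ (A %% 2)%Z = 1 by lia.
  by exists (A %/ 2)%Z; lia.
have e' : A = 1 + 2 * (A %/ 2)%Z by lia.
have [o0 ov] := vodd (A %/ 2)%Z.
have hy : vge (B%:~R * pi) (v ((1 + 2 * (A %/ 2)%Z)%:~R) + 1).
  rewrite ov add0r; have := vge_mul (vge_int B) vge_pi; rewrite add0r; by [].
have [s0 sv] := vstrict o0 hy.
move: h; rewrite /emb /= e'; case=> [h|h]; first by move: s0; rewrite h eqxx.
move: h; rewrite sv ov; lia.
Qed.

Lemma vge_int_even a : vge ((2 * a)%:~R) 2.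
Proof.
rewrite intrM int2; have := vge_mul (vge_2X 1) (vge_int a).
by rewrite expr1 addr0.
Qed.

Lemma dec2 A B : vge (emb (A, B)) 2 -> exists a b, A = 2 * a /\ B = 2 * b.
Proof.
move=> h.
have h1 : vge (emb (A, B)) 1 by apply: vge_le h.
have [a ha] := dec1 h1.
exists a.
have hB : vge (B%:~R * pi) 2.
  rewrite (_ : B%:~R * pi = emb (A, B) - (2 * a)%:~R); last by rewrite /emb /= ha; ring.
  by apply: vge_sub => //; apply: vge_int_even.
have hB1 : vge (B%:~R) 1.
  case: (eqVneq (B%:~R : K) 0) => [->|b0]; first by left.
  case: hB => [e|e]; first by move: (mulf_neq0 b0 pi_neq0); rewrite e eqxx.
  by move: e; rewrite vM ?pi_neq0 // vpi => e; right; lia.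
have [b hb] := even_of_vge hB1.
by exists b.
Qed.

Lemma dec_half a b (n : int) : vge (emb (2 * a, 2 * b)) (n + 2) -> vge (emb (a, b)) n.
Proof.
have e : emb (2 * a, 2 * b) = 2 * emb (a, b) by rewrite /emb /= !intrM int2; ring.
rewrite e; case: (eqVneq (emb (a, b)) 0) => [->|e0]; first by left.
have [_ t0] := vge_2.
case=> [h|h]; first by move: (mulf_neq0 t0 e0); rewrite h eqxx.
by move: h; rewrite vM // v2 => h; right; lia.
Qed.

Lemma decode A B : vge (emb (A, B)) 7 -> (A %% 16)%Z = 0 /\ (B %% 8)%Z = 0.
Proof.
move=> h.
have q7 : vge (emb (A, B)) 2 by apply: vge_le h.
have [a1 [b1 [e1 f1]]] := dec2 q7.
rewrite e1 f1 in h.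
have h5 : vge (emb (a1, b1)) 5 by apply: dec_half; apply: vge_le h.
have q5 : vge (emb (a1, b1)) 2 by apply: vge_le h5.
have [a2 [b2 [e2 f2]]] := dec2 q5.
rewrite e2 f2 in h5.
have h3 : vge (emb (a2, b2)) 3 by apply: dec_half; apply: vge_le h5.
have q3 : vge (emb (a2, b2)) 2 by apply: vge_le h3.
have [a3 [b3 [e3 f3]]] := dec2 q3.
rewrite e3 f3 in h3.
have h1 : vge (emb (a3, b3)) 1 by apply: dec_half; apply: vge_le h3.
have [a4 e4] := dec1 h1.
rewrite e1 e2 e3 e4 f1 f2 f3.
rewrite (_ : 2 * (2 * (2 * (2 * a4))) = a4 * 16); last by ring.
rewrite (_ : 2 * (2 * (2 * b3)) = b3 * 8); last by ring.
by rewrite !modzMl.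
Qed.

Lemma var_sound c (u : bool) z : vge z 0 -> (u -> z != 0 /\ v z = 0) ->
  exists p, p \in reslist d c u /\ Rel (emb c * z ^+ 4) p.
Proof.
move=> hz hu.
have [[a b] hp] := digits hz 7.
have hr : Rel z ((a %% 16)%Z, (b %% 8)%Z) by apply: Rel_red; exact: hp.
have ha0 : 0 <= (a %% 16)%Z by apply: modz_ge0.
have ha1 : (a %% 16 < 16)%Z by apply: ltz_pmod.
have hb0 : 0 <= (b %% 8)%Z by apply: modz_ge0.
have hb1 : (b %% 8 < 8)%Z by apply: ltz_pmod.
set a' := (a %% 16)%Z in hr ha0 ha1.
set b' := (b %% 8)%Z in hr hb0 hb1.
have [na ena] : exists na : nat, a' = na%:Z by exists `|a'|%N; rewrite gez0_abs.
have [nb enb] : exists nb : nat, b' = nb%:Z by exists `|b'|%N; rewrite gez0_abs.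
rewrite ena enb in hr.
exists (pmul d c (pow4 d (Posz na, Posz nb))); split.
  rewrite mem_undup; apply: (allpairs_f (fun a b => pmul d c (pow4 d (Posz a, Posz b)))).
    rewrite mem_filter mem_iota add0n andbC.
    have -> : (na < 16)%N by lia.
    rewrite /=; case: u hu => //= hu.
    case hodd: (odd na) => //.
    have [z0 vz] := hu isT.
    have hna : na = (na./2 * 2)%N by rewrite -[na in LHS]odd_double_half hodd muln2.
    have hv : vge (emb (Posz na, Posz nb)) 1.
      rewrite /emb /=; apply: vge_add.
        rewrite (_ : Posz na = 2 * (na./2)%:Z); last by lia.
        by apply: vge_le (vge_int_even _).
      by have := vge_mul (vge_int nb) vge_pi; rewrite add0r.
    have : vge z 1.
      rewrite (_ : z = (z - emb (Posz na, Posz nb)) + emb (Posz na, Posz nb)); last by ring.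
      by apply: vge_add => //; apply: vge_le hr.
    by case=> [e|e]; [move: z0; rewrite e eqxx | move: e; rewrite vz].
  by rewrite mem_iota; lia.
apply: Rel_mul; first exact: Rel_emb.
rewrite (_ : z ^+ 4 = (z * z) * (z * z)); last by ring.
rewrite /pow4; apply: Rel_mul; apply: Rel_mul => //.
Qed.

Lemma sum_sound (r : seq nat) (t : nat -> K) (L : nat -> seq (int * int)) :
  (forall i, i \in r -> exists p, p \in L i /\ Rel (t i) p) ->
  exists p, p \in foldr (fun i S => sumset (L i) S) [:: (0, 0)] r /\
            Rel (\sum_(i <- r) t i) p.
Proof.
elim: r => [|i r IH] H.
  exists (0, 0); split; first by rewrite inE.
  by rewrite big_nil /Rel emb0 subr0; left.
have [p [hp1 hp2]] := H i (mem_head i r).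
have [q [hq1 hq2]] : exists q, q \in foldr (fun i S => sumset (L i) S) [:: (0, 0)] r /\
            Rel (\sum_(i <- r) t i) q.
  by apply: IH => k hk; apply: H; rewrite inE hk orbT.
exists (padd p q); split.
  by rewrite /= /sumset mem_undup; apply: allpairs_f.
by rewrite big_cons; apply: Rel_add.
Qed.

Lemma core (c : nat -> int * int) (j : nat) (z : nat -> K) :
  check d c j -> (forall i, (i < 10)%N -> vge (z i) 0) -> (j < 10)%N ->
  z j != 0 -> v (z j) = 0 ->
  \sum_(i <- iota 0 10) emb (c i) * z i ^+ 4 != 0.
Proof.
move=> hc hz hj zj vj; apply/negP => /eqP h0.
have hs : forall i, i \in iota 0 10 -> exists p, p \in reslist d (c i) (i == j) /\ Rel (emb (c i) * z i ^+ 4) p.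
  move=> i; rewrite mem_iota add0n => /andP [_ hi].
  apply: var_sound; first exact: hz.
  by move/eqP => ->.
have [[p1 p2] [hp hr]] := sum_sound hs.
move: hr; rewrite h0 /Rel sub0r => /vge_opp; rewrite opprK => /decode [e1 e2].
by move/allP: hc => /(_ _ hp); rewrite /= e1 e2 eqxx.
Qed.

End Val.

Lemma sum_iota (K : fieldType) (f : nat -> K) :
  \sum_(i <- iota 0 10) f i = \sum_(i < 10) f i.
Proof. by rewrite -(big_mkord xpredT f). Qed.

Lemma Fsum (K : fieldType) (pi gam : K) (g : int * int) (y : 'I_10 -> K) :
  gam = emb pi g ->
  Gform y + gam * Hform y = \sum_(i < 10) emb pi (cA g i) * y i ^+ 4.
Proof.
move=> eg; rewrite /Gform /Hform (big_mkcond (fun i : 'I_10 => (i < 4)%N)) (big_mkcond (fun i : 'I_10 => (4 <= i)%N)) mulr_sumr -big_split.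
apply: eq_bigr => i _; rewrite /cA /=.
case: ifP => h.
  have -> : (4 <= i)%N = false by apply/negbTE; rewrite -ltnNge.
  by rewrite /emb /= mul0r addr0 mulr0 addr0 mul1r.
have -> : (4 <= i)%N by rewrite leqNgt h.
by rewrite add0r eg.
Qed.

Lemma sum_scale (K : fieldType) (c : 'I_10 -> K) (x : 'I_10 -> K) (s : K) :
  \sum_(i < 10) c i * (x i / s) ^+ 4 = (\sum_(i < 10) c i * x i ^+ 4) * (s^-1) ^+ 4.
Proof. by rewrite mulr_suml; apply: eq_bigr => i _; rewrite exprMn mulrA. Qed.

Lemma main_gen (K : fieldType) (v : K -> int) (pi : K) (d : int) (gam : K) (g g' : int * int) :
  quad_ext_Q2 v pi d -> (exists k : int, d = 2 * (1 + 2 * k)) ->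
  gam = emb pi g -> gam = pi * emb pi g' -> checkA d g -> checkB d g' ->
  ~ exists x : 'I_10 -> K, nontrivial_zero (fun y => Gform y + gam * Hform y) x.
Proof.
move=> hq he eg eg' hA hB [x [hF [i0 hi0]]].
have hS : \sum_(i < 10) emb pi (cA g i) * x i ^+ 4 = 0 by rewrite -(Fsum x eg).
have [j hj hmin] : exists2 j, x j != 0 & forall i, x i != 0 -> v (x j) <= v (x i).
  case: (@arg_minP _ _ _ i0 (fun i => x i != 0) (fun i => v (x i)) hi0) => j hj hmin.
  by exists j.
have vint : forall (n : 'I_10) (s : K), s != 0 -> (x n != 0 -> v s <= v (x n)) -> vge v (x n / s) 0.
  move=> n s s0 hs; case: (eqVneq (x n) 0) => [->|xn0]; first by rewrite mul0r; left.
  have := hs xn0; right; rewrite (vM hq) ?invr_eq0 // (vV hq) //; lia.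
case: (boolP [exists i : 'I_10, ((i < 4)%N && (x i != 0)) && (v (x i) == v (x j))]).
  move/existsP => [i1 /andP [/andP [hi1 hx1] /eqP hv1]].
  set z := fun n : nat => x (inord n) / x i1.
  have hc : check d (cA g) i1.
    have := allP hA i1; rewrite mem_iota add0n ltn_ord (leqNgt 4) hi1 /=; by apply.
  have hz : forall n, (n < 10)%N -> vge v (z n) 0.
    by move=> n hn; apply: vint => // h; rewrite hv1; apply: hmin.
  have hz1 : z i1 = 1 by rewrite /z inord_val divff.
  have := core hq he hc hz (ltn_ord i1); rewrite hz1 oner_neq0 (v1 hq) => /(_ isT erefl).
  rewrite sum_iota.
  have -> : \sum_(i < 10) emb pi (cA g i) * z i ^+ 4 =
            \sum_(i < 10) emb pi (cA g i) * (x i / x i1) ^+ 4.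
    by apply: eq_bigr => i _; rewrite /z inord_val.
  by rewrite sum_scale hS mul0r eqxx.
move=> hn.
have hlt : forall i : 'I_10, (i < 4)%N -> x i != 0 -> v (x j) < v (x i).
  move=> i hi xi; rewrite lt_neqAle hmin // andbT; apply/negP => /eqP e.
  move/negP: hn; apply; apply/existsP; exists i; by rewrite hi xi /= e eqxx.
have hj4 : (4 <= j)%N.
  rewrite leqNgt; apply/negP => hj4; have := hlt j hj4 hj; by rewrite ltxx.
set z := fun n : nat => x (inord n) / x j / (if (n < 4)%N then pi else 1).
have hc : check d (cB d g') j.
  have := allP hB j; rewrite mem_iota add0n ltn_ord /= ltnNge hj4 /=; by apply.
have pi0 := pi_neq0 hq.
have hz : forall n, (n < 10)%N -> vge v (z n) 0.
  move=> n hnn; rewrite /z; case: ifP => hn4; last first.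
    by rewrite divr1; apply: vint => // h; apply: hmin.
  case: (eqVneq (x (inord n)) 0) => [->|xn0]; first by rewrite !mul0r; left.
  have hin : ((inord n : 'I_10) < 4)%N by rewrite inordK.
  have := hlt (inord n) hin xn0.
  right; rewrite (vM hq) ?mulf_neq0 ?invr_eq0 // (vM hq) ?invr_eq0 // !(vV hq) // (vpi hq); lia.
have hz1 : z j = 1 by rewrite /z inord_val ltnNge hj4 /= divr1 divff.
have := core hq he hc hz (ltn_ord j); rewrite hz1 oner_neq0 (v1 hq) => /(_ isT erefl).
have e : pi * \sum_(i <- iota 0 10) emb pi (cB d g' i) * z i ^+ 4 =
         \sum_(i < 10) emb pi (cA g i) * (x i / x j) ^+ 4.
  rewrite sum_iota mulr_sumr; apply: eq_bigr => i _; rewrite /z inord_val /cB /cA.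
  case: ifP => hi.
    by rewrite /emb /= -(pi2 hq); field; rewrite hj pi0.
  by rewrite divr1 mulrA -eg' eg.
move: e; rewrite sum_scale hS mul0r => /eqP; rewrite mulf_eq0 (negbTE pi0) /= => /eqP ->.
by rewrite eqxx.
Qed.

Theorem mainTheorem2 :
  (forall (K : fieldType) (v : K -> int) (pi : K) (d : int),
     (d = 2 \/ d = 10) -> quad_ext_Q2 v pi d ->
     ~ exists x : 'I_10 -> K,
         nontrivial_zero (fun y => Gform y + pi * Hform y) x) /\
  (forall (K : fieldType) (v : K -> int) (pi : K) (d : int),
     (d = -2 \/ d = -10) -> quad_ext_Q2 v pi d ->
     ~ exists x : 'I_10 -> K,
         nontrivial_zero (fun y => Gform y + (pi + pi ^+ 2) * Hform y) x).
Proof.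
split.
  move=> K v pi d hd hq.
  apply: (main_gen (g := (0, 1)) (g' := (1, 0)) hq).
  - by case: hd => ->; [exists 0 | exists 2]; lia.
  - by rewrite /emb /=; ring.
  - by rewrite /emb /=; ring.
  - by case: hd => ->; vm_compute; reflexivity.
  - by case: hd => ->; vm_compute; reflexivity.
move=> K v pi d hd hq.
apply: (main_gen (g := (d, 1)) (g' := (1, 1)) hq).
- by case: hd => ->; [exists (-1) | exists (-3)]; lia.
- by rewrite /emb /= -(pi2 hq); ring.
- by rewrite /emb /=; ring.
- by case: hd => ->; vm_compute; reflexivity.
- by case: hd => ->; vm_compute; reflexivity.
Qed.
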